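(* Let $\alpha_a$ be a labeled dGL hybrid game and $\varphi$ a formula, and let $M$ be the model predictive Angelic subvalue map for $\alpha_a$ and $\varphi$. Then $\models\langle\mathcal{P}(\alpha_a,M)\rangle\varphi\leftrightarrow\langle\alpha\rangle\varphi$. Dually, if $M'$ is the model predictive Demonic subvalue map for $\alpha_a$ and $\varphi$, then $\models[\mathcal{D}(\alpha_a,M')]\varphi\leftrightarrow[\alpha]\varphi$.
   Context: Differential game logic (dGL). Hybrid games are generated by $\alpha,\beta ::= x:=e \mid \alpha;\beta \mid ?Q \mid \{x'=f(x)\,\&\,Q\} \mid \alpha^{*} \mid \alpha\cup\beta \mid x:=* \mid\ !Q \mid \{x'=f(x)\,\&\,Q\}^{d} \mid \alpha^{\times} \mid \alpha\cap\beta \mid x:=\otimes$, with $x$ a real variable (vector for ODEs), $e,f(x)$ polynomial terms, $Q$ a formula. Players Angel and Demon: $x:=e$ deterministic assignment; in $x:=*$ Angel (in $x:=\otimes$ Demon) assigns any real; in $\{x'=f(x)\&Q\}$ Angel (in $\{\cdot\}^d$ Demon) chooses a duration $r\ge 0$ of following the ODE with $Q$ true throughout; $?Q$ makes Angel lose and $!Q$ makes Demon lose if $Q$ is false; in $\alpha\cup\beta$ Angel (in $\alpha\cap\beta$ Demon) chooses the branch; in $\alpha^*$ Angel (in $\alpha^\times$ Demon) decides before each iteration whether to repeat or stop; $\alpha;\beta$ sequential. Formulas: polynomial (in)equalities closed under connectives, real quantifiers, and modalities $\langle\alpha\rangle\varphi$ (Angel can win $\alpha$ reaching $\varphi$) and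 $[\alpha]\varphi\equiv\neg\langle\alpha\rangle\neg\varphi$, with the standard dGL winning-region semantics ($\langle x:=*\rangle\varphi\leftrightarrow\exists x\varphi$, $\langle x:=\otimes\rangle\varphi\leftrightarrow\forall x\varphi$, $\langle ?Q\rangle\varphi\leftrightarrow Q\wedge\varphi$, $\langle !Q\rangle\varphi\leftrightarrow(Q\rightarrow\varphi)$, $\cup$ as disjunction, $\cap$ as conjunction, $\langle\alpha;\beta\rangle\varphi\leftrightarrow\langle\alpha\rangle\langle\beta\rangle\varphi$, Angel ODE existential, Demon ODE universal, $\langle\alpha^*\rangle$ least and $\langle\alpha^\times\rangle$ greatest fixed point). $\models$ denotes validity. Labels: every node of the syntax tree carries a unique label; $\alpha_a$ has root label $a$; $\mathrm{nodes}(\alpha_a)$ is its set of subgame labels; $\mathsf{end}$ is a special extra label. A map $S$ assigns formulas to a label set containing $\mathrm{nodes}(\alpha_a)\cup\{\mathsf{end}\}$; $S\{\mathsf{end}\mapsto Q\}$ replaces the value at $\mathsf{end}$. $\gamma_g,\delta_d$ denote immediate subgames with root labels $g,d$. Game suffix: $\mathrm{suffix}_a(\alpha_a)=\alpha_a$; for $b\ne a$: for loops $((\gamma_g)^* )_a,((\gamma_g)^\times)_a$ it is $\mathrm{suffix}_b(\gamma_g);\alpha_a$; for $\cup,\cap$ the suffix within the branch containing $b$; for $(\gamma_g;\delta_d)_a$ it is $\mathrm{suffix}_b(\gamma_g);\delta_d$ if $b\in\mathrm{nodes}(\gamma_g)$ else $\mathrm{suffix}_b(\delta_d)$. Model predictive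 Angelic subvalue map for $\alpha_a$ and $\varphi$: $M(\mathsf{end})=\varphi$ and $M(b)=\langle\mathrm{suffix}_b(\alpha_a)\rangle\varphi$ for $b\in\mathrm{nodes}(\alpha_a)$. Model predictive Demonic subvalue map: $M'(\mathsf{end})=\varphi$ and $M'(b)=[\mathrm{suffix}_b(\alpha_a)]\varphi$. Angelic existential projection $\mathcal{P}(\alpha_a,S)$: $(x:=* )_a\mapsto(x:=* )_a;?S(\mathsf{end})$; Angel ODE $\mapsto$ ODE$;?S(\mathsf{end})$; $(\gamma_g\cup\delta_d)_a\mapsto(?S(g);\mathcal{P}(\gamma_g,S))\cup(?S(d);\mathcal{P}(\delta_d,S))$; $((\gamma_g)^* )_a\mapsto(?S(g);\mathcal{P}(\gamma_g,S\{\mathsf{end}\mapsto S(a)\}))^*;?S(\mathsf{end})$; $(\gamma_g;\delta_d)_a\mapsto\mathcal{P}(\gamma_g,S\{\mathsf{end}\mapsto S(d)\});\mathcal{P}(\delta_d,S)$; $\cap\mapsto\mathcal{P}(\gamma_g,S)\cap\mathcal{P}(\delta_d,S)$; $((\gamma_g)^\times)_a\mapsto\mathcal{P}(\gamma_g,S\{\mathsf{end}\mapsto S(a)\})^\times$; $x:=e,x:=\otimes,?Q,!Q$, Demon ODE unchanged (labels preserved, new nodes fresh labels). Demonic existential projection $\mathcal{D}(\alpha_a,S)$: $(x:=\otimes)_a\mapsto(x:=\otimes)_a;!S(\mathsf{end})$; Demon ODE $\mapsto$ ODE$^d;!S(\mathsf{end})$; $(\gamma_g\cap\delta_d)_a\mapsto(!S(g);\mathcal{D}(\gamma_g,S))\cap(!S(d);\mathcal{D}(\delta_d,S))$;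 $((\gamma_g)^\times)_a\mapsto(!S(g);\mathcal{D}(\gamma_g,S\{\mathsf{end}\mapsto S(g)\vee S(\mathsf{end})\}))^\times;!S(\mathsf{end})$; $(\gamma_g;\delta_d)_a\mapsto\mathcal{D}(\gamma_g,S\{\mathsf{end}\mapsto S(d)\});\mathcal{D}(\delta_d,S)$; $\cup\mapsto\mathcal{D}(\gamma_g,S)\cup\mathcal{D}(\delta_d,S)$; $((\gamma_g)^* )_a\mapsto\mathcal{D}(\gamma_g,S\{\mathsf{end}\mapsto S(a)\})^*$; $x:=e,x:=*,?Q,!Q$, Angel ODE unchanged. *)

(* Defs.v *)
From Stdlib Require Import Reals List Arith.
Import ListNotations.
Open Scope R_scope.

Definition var := nat.
Definition state := var -> R.

Definition upd (w : state) (x : var) (r : R) : state :=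
  fun y => if Nat.eqb y x then r else w y.

Inductive term : Type :=
| TVar (x : var)
| TConst (c : R)
| TNeg (t : term)
| TPlus (t1 t2 : term)
| TTimes (t1 t2 : term).

Fixpoint term_sem (t : term) (w : state) : R :=
  match t with
  | TVar x => w x
  | TConst c => c
  | TNeg t => - term_sem t w
  | TPlus t1 t2 => term_sem t1 w + term_sem t2 w
  | TTimes t1 t2 => term_sem t1 w * term_sem t2 w
  end.

(** An ODE system x1'=f1, ..., xn'=fn is a list of pairs (xi, fi). *)
Definition ode := list (var * term).

(** Every game node carries a label (a nat), the first argument of each
    constructor. The special label [end] is [End] of type [label] below. *)
Inductive game : Type :=
| GAssign (l : nat) (x : var) (e : term)
| GAny (l : nat) (x : var)                         (* x := *      (Angel) *)
| GDAny (l : nat) (x : var)                        (* x := ⊗      (Demon) *)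
| GTest (l : nat) (Q : fmla)
| GDTest (l : nat) (Q : fmla)                      (* !Q *)
| GODE (l : nat) (o : ode) (Q : fmla)              (* {x'=f & Q}    (Angel) *)
| GDODE (l : nat) (o : ode) (Q : fmla)             (* {x'=f & Q}^d  (Demon) *)
| GSeq (l : nat) (g1 g2 : game)
| GChoice (l : nat) (g1 g2 : game)
| GDChoice (l : nat) (g1 g2 : game)                (* g1 ∩ g2 *)
| GStar (l : nat) (g : game)
| GCross (l : nat) (g : game)                      (* g^×  *)
with fmla : Type :=
| FGeq (t1 t2 : term)
| FGt (t1 t2 : term)
| FEq (t1 t2 : term)
| FNot (p : fmla)
| FAnd (p q : fmla)
| FOr (p q : fmla)
| FImp (p q : fmla)
| FAll (x : var) (p : fmla)
| FEx (x : var) (p : fmla)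
| Dia (g : game) (p : fmla).

Definition Box (g : game) (p : fmla) : fmla := FNot (Dia g (FNot p)).
Definition FEquiv (p q : fmla) : fmla := FAnd (FImp p q) (FImp q p).

Definition ode_var (o : ode) (z : var) : Prop := exists e, In (z, e) o.

Definition ode_sol (o : ode) (Qs : state -> Prop) (w : state) (r : R)
  (y : R -> state) : Prop :=
  0 <= r /\ y 0 = w /\
  (forall t, 0 <= t <= r ->
     Qs (y t) /\
     (forall z, ~ ode_var o z -> y t z = w z) /\
     (forall x e, In (x, e) o ->
        derivable_pt_lim (fun s => y s x) t (term_sem e (y t)))).

Fixpoint game_sem (g : game) (X : state -> Prop) {struct g} : state -> Prop :=
  match g with
  | GAssign _ x e => fun w => X (upd w x (term_sem e w))
  | GAny _ x => fun w => exists r, X (upd w x r)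
  | GDAny _ x => fun w => forall r, X (upd w x r)
  | GTest _ Q => fun w => fmla_sem Q w /\ X w
  | GDTest _ Q => fun w => fmla_sem Q w -> X w
  | GODE _ o Q => fun w =>
      exists r y, ode_sol o (fmla_sem Q) w r y /\ X (y r)
  | GDODE _ o Q => fun w =>
      forall r y, ode_sol o (fmla_sem Q) w r y -> X (y r)
  | GSeq _ g1 g2 => game_sem g1 (game_sem g2 X)
  | GChoice _ g1 g2 => fun w => game_sem g1 X w \/ game_sem g2 X w
  | GDChoice _ g1 g2 => fun w => game_sem g1 X w /\ game_sem g2 X w
  | GStar _ g1 => fun w =>
      forall Z : state -> Prop,
        (forall v, X v \/ game_sem g1 Z v -> Z v) -> Z w
  | GCross _ g1 => fun w =>
      exists Z : state -> Prop,
        (forall v, Z v -> X v /\ game_sem g1 Z v) /\ Z w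
  end
with fmla_sem (p : fmla) (w : state) {struct p} : Prop :=
  match p with
  | FGeq t1 t2 => term_sem t1 w >= term_sem t2 w
  | FGt t1 t2 => term_sem t1 w > term_sem t2 w
  | FEq t1 t2 => term_sem t1 w = term_sem t2 w
  | FNot p => ~ fmla_sem p w
  | FAnd p q => fmla_sem p w /\ fmla_sem q w
  | FOr p q => fmla_sem p w \/ fmla_sem q w
  | FImp p q => fmla_sem p w -> fmla_sem q w
  | FAll x p => forall r, fmla_sem p (upd w x r)
  | FEx x p => exists r, fmla_sem p (upd w x r)
  | Dia g p => game_sem g (fmla_sem p) w
  end.

Definition valid (p : fmla) : Prop := forall w, fmla_sem p w.

Definition lab (g : game) : nat :=
  match g with
  | GAssign l _ _ | GAny l _ | GDAny l _ | GTest l _ | GDTest l _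
  | GODE l _ _ | GDODE l _ _ | GSeq l _ _ | GChoice l _ _
  | GDChoice l _ _ | GStar l _ | GCross l _ => l
  end.

(** nodes(α): labels of all subgames (not descending into formulas). *)
Fixpoint nodes (g : game) : list nat :=
  match g with
  | GSeq l g1 g2 | GChoice l g1 g2 | GDChoice l g1 g2 =>
      l :: nodes g1 ++ nodes g2
  | GStar l g1 | GCross l g1 => l :: nodes g1
  | _ => [lab g]
  end.

Definition memb (b : nat) (s : list nat) : bool := existsb (Nat.eqb b) s.

(** Label domain of subvalue maps: node labels plus the extra label [end]. *)
Inductive label : Type := End | Node (b : nat).

Definition upd_end (S : label -> fmla) (Q : fmla) : label -> fmla :=
  fun l => match l with End => Q | Node b => S (Node b) end.

(** Only meaningful for b ∈ nodes(α_a); the labels of the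
    sequential-composition nodes it creates are irrelevant (the semantics
    ignores labels), we reuse the label of the enclosing node. *)
Fixpoint suffix (b : nat) (g : game) : game :=
  if Nat.eqb b (lab g) then g else
  match g with
  | GStar a g1 => GSeq a (suffix b g1) g
  | GCross a g1 => GSeq a (suffix b g1) g
  | GChoice _ g1 g2 | GDChoice _ g1 g2 =>
      if memb b (nodes g1) then suffix b g1 else suffix b g2
  | GSeq a g1 g2 =>
      if memb b (nodes g1) then GSeq a (suffix b g1) g2 else suffix b g2
  | _ => g
  end.

Definition mpAngel (alpha : game) (phi : fmla) : label -> fmla :=
  fun l => match l with End => phi | Node b => Dia (suffix b alpha) phi end.

Definition mpDemon (alpha : game) (phi : fmla) : label -> fmla :=
  fun l => match l with End => phi | Node b => Box (suffix b alpha) phi end.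

Local Open Scope nat_scope.

(** * Existential projections.
    The counter [n] supplies fresh labels for newly created nodes; original
    nodes keep their labels. *)
Fixpoint projA (g : game) (S : label -> fmla) (n : nat) : game * nat :=
  match g with
  | GAny a x => (GSeq n (GAny a x) (GTest (n+1) (S End)), n+2)
  | GODE a o Q => (GSeq n (GODE a o Q) (GTest (n+1) (S End)), n+2)
  | GChoice a g1 g2 =>
      let '(p1, n1) := projA g1 S n in
      let '(p2, n2) := projA g2 S n1 in
      (GChoice a (GSeq n2 (GTest (n2+1) (S (Node (lab g1)))) p1)
                 (GSeq (n2+2) (GTest (n2+3) (S (Node (lab g2)))) p2), n2+4)
  | GStar a g1 =>
      let '(p, n1) := projA g1 (upd_end S (S (Node a))) n in
      (GSeq n1 (GStar a (GSeq (n1+1) (GTest (n1+2) (S (Node (lab g1)))) p))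
               (GTest (n1+3) (S End)), n1+4)
  | GSeq a g1 g2 =>
      let '(p1, n1) := projA g1 (upd_end S (S (Node (lab g2)))) n in
      let '(p2, n2) := projA g2 S n1 in
      (GSeq a p1 p2, n2)
  | GDChoice a g1 g2 =>
      let '(p1, n1) := projA g1 S n in
      let '(p2, n2) := projA g2 S n1 in
      (GDChoice a p1 p2, n2)
  | GCross a g1 =>
      let '(p, n1) := projA g1 (upd_end S (S (Node a))) n in
      (GCross a p, n1)
  | _ => (g, n)
  end.

Fixpoint projD (g : game) (S : label -> fmla) (n : nat) : game * nat :=
  match g with
  | GDAny a x => (GSeq n (GDAny a x) (GDTest (n+1) (S End)), n+2)
  | GDODE a o Q => (GSeq n (GDODE a o Q) (GDTest (n+1) (S End)), n+2)
  | GDChoice a g1 g2 =>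
      let '(p1, n1) := projD g1 S n in
      let '(p2, n2) := projD g2 S n1 in
      (GDChoice a (GSeq n2 (GDTest (n2+1) (S (Node (lab g1)))) p1)
                  (GSeq (n2+2) (GDTest (n2+3) (S (Node (lab g2)))) p2), n2+4)
  | GCross a g1 =>
      let '(p, n1) :=
        projD g1 (upd_end S (FOr (S (Node (lab g1))) (S End))) n in
      (GSeq n1 (GCross a (GSeq (n1+1) (GDTest (n1+2) (S (Node (lab g1)))) p))
               (GDTest (n1+3) (S End)), n1+4)
  | GSeq a g1 g2 =>
      let '(p1, n1) := projD g1 (upd_end S (S (Node (lab g2)))) n in
      let '(p2, n2) := projD g2 S n1 in
      (GSeq a p1 p2, n2)
  | GChoice a g1 g2 =>
      let '(p1, n1) := projD g1 S n in
      let '(p2, n2) := projD g2 S n1 in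
      (GChoice a p1 p2, n2)
  | GStar a g1 =>
      let '(p, n1) := projD g1 (upd_end S (S (Node a))) n in
      (GStar a p, n1)
  | _ => (g, n)
  end.

Definition fresh (g : game) : nat := S (list_max (nodes g)).
Definition projAngel (g : game) (Sm : label -> fmla) : game :=
  fst (projA g Sm (fresh g)).
Definition projDemon (g : game) (Sm : label -> fmla) : game :=
  fst (projD g Sm (fresh g)).

(* Main.v *)
Require Import Defs.
From Stdlib Require Import Reals List Classical.

Lemma mono : forall g (X Y : state -> Prop), (forall w, X w -> Y w) ->
  forall w, game_sem g X w -> game_sem g Y w.
Proof.
  induction g; intros X Y HXY w H; simpl in *.
  - apply HXY; auto.
  - destruct H as [r Hr]; exists r; auto.
  - intro r; auto.
  - destruct H; split; auto.
  - intro; auto.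
  - destruct H as [r [y [H1 H2]]]; exists r, y; auto.
  - intros r y Hs; auto.
  - eapply IHg1; [| exact H]. intro v; apply IHg2; auto.
  - destruct H; [left|right]; eauto.
  - destruct H; split; eauto.
  - intros Z HZ; apply H; intros v [Hv|Hv]; apply HZ; [left; auto | right; auto].
  - destruct H as [Z [HZ Hw]]; exists Z; split; auto.
    intros v Hv; destruct (HZ v Hv); split; auto.
Qed.

Lemma star_fold : forall a g (X : state -> Prop) v,
  X v \/ game_sem g (game_sem (GStar a g) X) v -> game_sem (GStar a g) X v.
Proof.
  intros a g X v H Z HZ. apply HZ. destruct H as [H|H]; [left; auto|right].
  eapply mono; [|exact H]. intros u Hu; apply Hu; auto.
Qed.

Lemma cross_unfold : forall a g (X : state -> Prop) v,
  game_sem (GCross a g) X v -> X v /\ game_sem g (game_sem (GCross a g) X) v.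
Proof.
  intros a g X v [W [HW Hv]]. destruct (HW v Hv) as [H1 H2]. split; auto.
  eapply mono; [|exact H2]. intros u Hu. exists W; auto.
Qed.

Lemma cross_fold : forall a g (X : state -> Prop) v,
  X v /\ game_sem g (game_sem (GCross a g) X) v -> game_sem (GCross a g) X v.
Proof.
  intros a g X v H. exists (fun u => X u /\ game_sem g (game_sem (GCross a g) X) u).
  split; auto. intros u [H1 H2]; split; auto.
  eapply mono; [|exact H2]. intros t Ht. apply cross_unfold; auto.
Qed.

Lemma lab_in : forall g, In (lab g) (nodes g).
Proof. destruct g; simpl; auto. Qed.

Lemma suffix_self : forall g, suffix (lab g) g = g.
Proof. destruct g; simpl; rewrite Nat.eqb_refl; reflexivity. Qed.

Lemma memb_In : forall b l, memb b l = true <-> In b l.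
Proof.
  intros b l. unfold memb. rewrite existsb_exists. split.
  - intros [x [H1 H2]]. apply Nat.eqb_eq in H2. subst; auto.
  - intros H. exists b; split; auto. apply Nat.eqb_refl.
Qed.

Lemma nodup_disj : forall (l1 l2 : list nat), NoDup (l1 ++ l2) ->
  forall b, In b l1 -> ~ In b l2.
Proof.
  induction l1; simpl; intros l2 H b H1 H2; [auto|].
  inversion H; subst. destruct H1 as [H1|H1].
  - subst. apply H4. apply in_or_app; auto.
  - eapply IHl1; eauto.
Qed.

Lemma nd3 : forall (a : nat) (l1 l2 : list nat), NoDup (a :: l1 ++ l2) ->
  NoDup l1 /\ NoDup l2 /\ ~ In a l1 /\ ~ In a l2 /\
  (forall b, In b l1 -> ~ In b l2).
Proof.
  intros a l1 l2 H. inversion H; subst.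
  repeat split.
  - eapply NoDup_app_remove_r; eauto.
  - eapply NoDup_app_remove_l; eauto.
  - intro; apply H2; apply in_or_app; auto.
  - intro; apply H2; apply in_or_app; auto.
  - apply nodup_disj; auto.
Qed.

Lemma neq_eqb : forall a b, a <> b -> Nat.eqb b a = false.
Proof. intros. apply Nat.eqb_neq. auto. Qed.

Lemma memb_false : forall b l, ~ In b l -> memb b l = false.
Proof.
  intros b l H. destruct (memb b l) eqn:E; auto. apply memb_In in E. tauto.
Qed.

Lemma suffix_bin_l : forall (mk : nat -> game -> game -> game) a g1 g2 b,
  (mk = GChoice \/ mk = GDChoice) ->
  NoDup (nodes (mk a g1 g2)) -> In b (nodes g1) ->
  suffix b (mk a g1 g2) = suffix b g1.
Proof.
  intros mk a g1 g2 b Hmk Hnd Hb.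
  destruct Hmk; subst; simpl in *; apply nd3 in Hnd as (_&_&Ha&_&_);
  rewrite neq_eqb by (intro; subst; tauto);
  rewrite (proj2 (memb_In _ _) Hb); auto.
Qed.

Lemma suffix_bin_r : forall (mk : nat -> game -> game -> game) a g1 g2 b,
  (mk = GChoice \/ mk = GDChoice) ->
  NoDup (nodes (mk a g1 g2)) -> In b (nodes g2) ->
  suffix b (mk a g1 g2) = suffix b g2.
Proof.
  intros mk a g1 g2 b Hmk Hnd Hb.
  destruct Hmk; subst; simpl in *; apply nd3 in Hnd as (_&_&_&Ha&Hd);
  rewrite neq_eqb by (intro; subst; tauto);
  rewrite memb_false by (intro Hc; exact (Hd b Hc Hb)); auto.
Qed.

Lemma suffix_seq_l : forall a g1 g2 b,
  NoDup (nodes (GSeq a g1 g2)) -> In b (nodes g1) ->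
  suffix b (GSeq a g1 g2) = GSeq a (suffix b g1) g2.
Proof.
  intros a g1 g2 b Hnd Hb. simpl in *. apply nd3 in Hnd as (_&_&Ha&_&_).
  rewrite neq_eqb by (intro; subst; tauto).
  rewrite (proj2 (memb_In _ _) Hb); auto.
Qed.

Lemma suffix_seq_r : forall a g1 g2 b,
  NoDup (nodes (GSeq a g1 g2)) -> In b (nodes g2) ->
  suffix b (GSeq a g1 g2) = suffix b g2.
Proof.
  intros a g1 g2 b Hnd Hb. simpl in *. apply nd3 in Hnd as (_&_&_&Ha&Hd).
  rewrite neq_eqb by (intro; subst; tauto).
  rewrite memb_false by (intro Hc; exact (Hd b Hc Hb)); auto.
Qed.

Lemma suffix_loop : forall (mk : nat -> game -> game) a g1 b,
  (mk = GStar \/ mk = GCross) ->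
  NoDup (nodes (mk a g1)) -> In b (nodes g1) ->
  suffix b (mk a g1) = GSeq a (suffix b g1) (mk a g1).
Proof.
  intros mk a g1 b Hmk Hnd Hb.
  destruct Hmk; subst; simpl in *; inversion Hnd; subst;
  rewrite neq_eqb by (intro; subst; tauto); auto.
Qed.

Lemma suffix_loop_self : forall (mk : nat -> game -> game) a g1,
  (mk = GStar \/ mk = GCross) -> suffix a (mk a g1) = mk a g1.
Proof. intros mk a g1 [H|H]; subst; simpl; rewrite Nat.eqb_refl; auto. Qed.

Lemma projA_sound : forall g S n p n', projA g S n = (p, n') ->
  forall Z w, game_sem p Z w -> game_sem g Z w.
Proof.
  induction g; intros S n p n' Heq Z w H; simpl in Heq;
  try (inversion Heq; subst; exact H).
  - inversion Heq; subst. simpl in H. destruct H as [r [_ Hr]]; exists r; auto.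
  - inversion Heq; subst. simpl in H. destruct H as [r [y [Hs [_ Hr]]]].
    exists r, y; auto.
  - destruct (projA g1 _ n) as [p1 n1] eqn:E1.
    destruct (projA g2 S n1) as [p2 n2] eqn:E2. inversion Heq; subst.
    simpl in *. eapply IHg1; [exact E1|].
    eapply mono; [|exact H]. intros v Hv; eapply IHg2; eauto.
  - destruct (projA g1 S n) as [p1 n1] eqn:E1.
    destruct (projA g2 S n1) as [p2 n2] eqn:E2. inversion Heq; subst.
    simpl in *. destruct H as [[_ H]|[_ H]]; [left|right]; eauto.
  - destruct (projA g1 S n) as [p1 n1] eqn:E1.
    destruct (projA g2 S n1) as [p2 n2] eqn:E2. inversion Heq; subst.
    simpl in *. destruct H as [H1 H2]; split; eauto.
  - destruct (projA g _ n) as [p1 n1] eqn:E1. inversion Heq; subst.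
    simpl in H. apply H. intros v [[_ Hv]|[_ Hv]]; apply star_fold.
    + left; auto.
    + right; eapply IHg; eauto.
  - destruct (projA g _ n) as [p1 n1] eqn:E1. inversion Heq; subst.
    simpl in H. destruct H as [W [HW Hw]]. exists W; split; auto.
    intros v Hv; destruct (HW v Hv); split; eauto.
Qed.

Lemma projA_complete : forall g S n p n' (X : state -> Prop),
  NoDup (nodes g) -> projA g S n = (p, n') ->
  (forall w, fmla_sem (S End) w <-> X w) ->
  (forall b, In b (nodes g) -> forall w,
      fmla_sem (S (Node b)) w <-> game_sem (suffix b g) X w) ->
  forall Z, (forall w, Z w -> X w) -> forall w, game_sem g Z w -> game_sem p Z w.
Proof.
  induction g; intros S n p n' X Hnd Heq HE HN Z HZX w H; simpl in Heq;
  try (inversion Heq; subst; exact H).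
  - inversion Heq; subst. simpl in H |- *. destruct H as [r Hr]; exists r.
    split; auto. apply HE; auto.
  - inversion Heq; subst. simpl in H |- *. destruct H as [r [y [Hs Hr]]].
    exists r, y; split; auto. split; auto. apply HE; auto.
  -
    destruct (projA g1 _ n) as [p1 n1] eqn:E1.
    destruct (projA g2 S n1) as [p2 n2] eqn:E2. inversion Heq; subst.
    pose proof Hnd as Hnd'. simpl in Hnd'. apply nd3 in Hnd' as (N1&N2&_&_&_).
    simpl in H |- *. apply mono with (X := game_sem g2 Z).
    { intros v Hv. eapply IHg2; eauto. intros b Hb u.
      rewrite <- suffix_seq_r with (a := l) (g1 := g1); auto.
      apply HN. simpl; right; apply in_or_app; auto. }
    eapply IHg1 with (X := game_sem g2 X); eauto.
    + intro u. simpl. rewrite HN by (simpl; right; apply in_or_app; right; apply lab_in).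
      rewrite suffix_seq_r, suffix_self; auto. tauto. apply lab_in.
    + intros b Hb u. simpl. rewrite HN by (simpl; right; apply in_or_app; left; auto).
      rewrite suffix_seq_l; auto. simpl. tauto.
    + intros u Hu. eapply mono; eauto.
  -
    destruct (projA g1 S n) as [p1 n1] eqn:E1.
    destruct (projA g2 S n1) as [p2 n2] eqn:E2. inversion Heq; subst.
    pose proof Hnd as Hnd'. simpl in Hnd'. apply nd3 in Hnd' as (N1&N2&_&_&_).
    simpl in H |- *. destruct H as [H|H]; [left|right]; split.
    + apply HN; [right; apply in_or_app; left; apply lab_in|].
      rewrite suffix_bin_l with (mk := GChoice), suffix_self; auto; [|apply lab_in].
      eapply mono; eauto.
    + eapply IHg1; eauto. intros b Hb u.
      rewrite <- suffix_bin_l with (mk := GChoice) (a := l) (g2 := g2); auto.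
      apply HN. right; apply in_or_app; auto.
    + apply HN; [right; apply in_or_app; right; apply lab_in|].
      rewrite suffix_bin_r with (mk := GChoice), suffix_self; auto; [|apply lab_in].
      eapply mono; eauto.
    + eapply IHg2; eauto. intros b Hb u.
      rewrite <- suffix_bin_r with (mk := GChoice) (a := l) (g1 := g1); auto.
      apply HN. right; apply in_or_app; auto.
  -
    destruct (projA g1 S n) as [p1 n1] eqn:E1.
    destruct (projA g2 S n1) as [p2 n2] eqn:E2. inversion Heq; subst.
    pose proof Hnd as Hnd'. simpl in Hnd'. apply nd3 in Hnd' as (N1&N2&_&_&_).
    simpl in H |- *. destruct H as [H1 H2]; split.
    + eapply IHg1; eauto. intros b Hb u.
      rewrite <- suffix_bin_l with (mk := GDChoice) (a := l) (g2 := g2); auto.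
      apply HN. right; apply in_or_app; auto.
    + eapply IHg2; eauto. intros b Hb u.
      rewrite <- suffix_bin_r with (mk := GDChoice) (a := l) (g1 := g1); auto.
      apply HN. right; apply in_or_app; auto.
  -
    destruct (projA g _ n) as [p1 n1] eqn:E1. inversion Heq; subst.
    pose proof Hnd as Hnd'. simpl in Hnd'. inversion Hnd'; subst.
    set (P := GSeq n1 (GStar l (GSeq (n1 + 1) (GTest (n1 + 2) (S (Node (lab g)))) p1))
                 (GTest (n1 + 3) (S End))).
    assert (HP : projA (GStar l g) S n = (P, (n1+4)%nat)) by (simpl; rewrite E1; reflexivity).
    assert (Hs := projA_sound (GStar l g) S n _ _ HP).
    assert (IHs : forall Y : state -> Prop,
      (forall u, Y u -> game_sem (GStar l g) X u) ->
      forall u, game_sem g Y u -> game_sem p1 Y u).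
    { intros Y HY u Hu. eapply IHg with (X := game_sem (GStar l g) X); eauto.
      - intro t. simpl. rewrite HN by (left; auto).
        rewrite suffix_loop_self with (mk := GStar); auto. tauto.
      - intros b Hb t. simpl. rewrite HN by (right; auto).
        rewrite suffix_loop with (mk := GStar); auto. simpl. tauto. }
    change (game_sem P Z w).
    simpl in H. apply H. intros v Hv.
    change (game_sem (GStar l (GSeq (n1 + 1) (GTest (n1 + 2) (S (Node (lab g)))) p1))
              (game_sem (GTest (n1 + 3) (S End)) Z) v).
    apply star_fold. destruct Hv as [Hv|Hv]; [left|right].
    + simpl. split; auto. apply HE; auto.
    + assert (HK : forall u, game_sem P Z u -> game_sem (GStar l g) X u).
      { intros u Hu. eapply mono; [exact HZX|]. eapply Hs. exact Hu. }
      simpl. split.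
      * apply HN; [right; apply lab_in|].
        rewrite suffix_loop with (mk := GStar); auto; [|apply lab_in].
        rewrite suffix_self. simpl. eapply mono; [exact HK| exact Hv].
      * apply IHs; auto.
  -
    destruct (projA g _ n) as [p1 n1] eqn:E1. inversion Heq; subst.
    pose proof Hnd as Hnd'. simpl in Hnd'. inversion Hnd'; subst.
    simpl in H. destruct H as [W [HW Hw]]. exists W; split; auto.
    intros v Hv; destruct (HW v Hv) as [HZv Hg]; split; auto.
    eapply IHg with (X := game_sem (GCross l g) X); eauto.
    + intro t. simpl. rewrite HN by (left; auto).
      rewrite suffix_loop_self with (mk := GCross); auto. tauto.
    + intros b Hb t. simpl. rewrite HN by (right; auto).
      rewrite suffix_loop with (mk := GCross); auto. simpl. tauto.
    + intros u Hu. exists W; split; auto. intros t Ht; destruct (HW t Ht); split; auto.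
Qed.

Lemma projD_sound : forall g S n p n', projD g S n = (p, n') ->
  forall Z w, game_sem g Z w -> game_sem p Z w.
Proof.
  induction g; intros S n p n' Heq Z w H; simpl in Heq;
  try (inversion Heq; subst; exact H).
  - inversion Heq; subst. simpl in *. intros r _; auto.
  - inversion Heq; subst. simpl in *. intros r y Hs _; eauto.
  - destruct (projD g1 _ n) as [p1 n1] eqn:E1.
    destruct (projD g2 S n1) as [p2 n2] eqn:E2. inversion Heq; subst.
    simpl in H |- *. eapply mono with (X := game_sem g2 Z).
    + intros v Hv; eapply IHg2; eauto.
    + eapply IHg1; eauto.
  - destruct (projD g1 S n) as [p1 n1] eqn:E1.
    destruct (projD g2 S n1) as [p2 n2] eqn:E2. inversion Heq; subst.
    simpl in H |- *. destruct H as [H|H]; [left|right]; eauto.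
  - destruct (projD g1 S n) as [p1 n1] eqn:E1.
    destruct (projD g2 S n1) as [p2 n2] eqn:E2. inversion Heq; subst.
    simpl in H |- *. destruct H as [H1 H2]; split; intros _; eauto.
  - destruct (projD g _ n) as [p1 n1] eqn:E1. inversion Heq; subst.
    simpl in H |- *. intros K HK. apply H. intros v [Hv|Hv]; apply HK.
    + left; auto.
    + right; eapply IHg; eauto.
  - destruct (projD g _ n) as [p1 n1] eqn:E1. inversion Heq; subst.
    simpl in H |- *. destruct H as [W [HW Hw]]. exists W; split; auto.
    intros v Hv; destruct (HW v Hv); split; eauto.
Qed.

Lemma projD_complete : forall g S n p n' (X : state -> Prop),
  NoDup (nodes g) -> projD g S n = (p, n') ->
  (forall w, fmla_sem (S End) w <-> ~ X w) ->
  (forall b, In b (nodes g) -> forall w,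
      fmla_sem (S (Node b)) w <-> ~ game_sem (suffix b g) X w) ->
  forall Z, (forall w, X w -> Z w) -> forall w, game_sem p Z w -> game_sem g Z w.
Proof.
  induction g; intros S n p n' X Hnd Heq HE HN Z HXZ w H; simpl in Heq;
  try (inversion Heq; subst; exact H).
  - inversion Heq; subst. simpl in H |- *. intro r.
    destruct (classic (X (upd w x r))) as [Hx|Hx]; auto. apply H, HE; auto.
  - inversion Heq; subst. simpl in H |- *. intros r y Hs.
    destruct (classic (X (y r))) as [Hx|Hx]; auto. eapply H; eauto. apply HE; auto.
  -
    destruct (projD g1 _ n) as [p1 n1] eqn:E1.
    destruct (projD g2 S n1) as [p2 n2] eqn:E2. inversion Heq; subst.
    pose proof Hnd as Hnd'. simpl in Hnd'. apply nd3 in Hnd' as (N1&N2&_&_&_).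
    simpl in H |- *.
    eapply IHg1 with (X := game_sem g2 X); eauto.
    + intro u. simpl. rewrite HN by (simpl; right; apply in_or_app; right; apply lab_in).
      rewrite suffix_seq_r, suffix_self; auto. tauto. apply lab_in.
    + intros b Hb u. simpl. rewrite HN by (simpl; right; apply in_or_app; left; auto).
      rewrite suffix_seq_l; auto. simpl. tauto.
    + intros u Hu. eapply mono; eauto.
    + apply mono with (X := game_sem p2 Z); auto.
      intros v Hv. eapply IHg2; eauto. intros b Hb u.
      rewrite <- suffix_seq_r with (a := l) (g1 := g1); auto.
      apply HN. simpl; right; apply in_or_app; auto.
  -
    destruct (projD g1 S n) as [p1 n1] eqn:E1.
    destruct (projD g2 S n1) as [p2 n2] eqn:E2. inversion Heq; subst.
    pose proof Hnd as Hnd'. simpl in Hnd'. apply nd3 in Hnd' as (N1&N2&_&_&_).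
    simpl in H |- *. destruct H as [H|H]; [left|right].
    + eapply IHg1; eauto. intros b Hb u.
      rewrite <- suffix_bin_l with (mk := GChoice) (a := l) (g2 := g2); auto.
      apply HN. right; apply in_or_app; auto.
    + eapply IHg2; eauto. intros b Hb u.
      rewrite <- suffix_bin_r with (mk := GChoice) (a := l) (g1 := g1); auto.
      apply HN. right; apply in_or_app; auto.
  -
    destruct (projD g1 S n) as [p1 n1] eqn:E1.
    destruct (projD g2 S n1) as [p2 n2] eqn:E2. inversion Heq; subst.
    pose proof Hnd as Hnd'. simpl in Hnd'. apply nd3 in Hnd' as (N1&N2&_&_&_).
    simpl in H |- *. destruct H as [H1 H2]; split.
    + destruct (classic (game_sem g1 Z w)) as [h|h]; auto. exfalso; apply h.
      eapply IHg1; eauto.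
      * intros b Hb u.
        rewrite <- suffix_bin_l with (mk := GDChoice) (a := l) (g2 := g2); auto.
        apply HN. right; apply in_or_app; auto.
      * apply H1. apply HN; [right; apply in_or_app; left; apply lab_in|].
        rewrite suffix_bin_l with (mk := GDChoice), suffix_self; auto; [|apply lab_in].
        intro Hc; apply h; eapply mono; eauto.
    + destruct (classic (game_sem g2 Z w)) as [h|h]; auto. exfalso; apply h.
      eapply IHg2; eauto.
      * intros b Hb u.
        rewrite <- suffix_bin_r with (mk := GDChoice) (a := l) (g1 := g1); auto.
        apply HN. right; apply in_or_app; auto.
      * apply H2. apply HN; [right; apply in_or_app; right; apply lab_in|].
        rewrite suffix_bin_r with (mk := GDChoice), suffix_self; auto; [|apply lab_in].
        intro Hc; apply h; eapply mono; eauto.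
  -
    destruct (projD g _ n) as [p1 n1] eqn:E1. inversion Heq; subst.
    pose proof Hnd as Hnd'. simpl in Hnd'. inversion Hnd'; subst.
    simpl in H. apply H. intros v [Hv|Hv]; apply star_fold; [left; auto|right].
    eapply IHg with (X := game_sem (GStar l g) X); eauto.
    + intro t. simpl. rewrite HN by (left; auto).
      rewrite suffix_loop_self with (mk := GStar); auto. tauto.
    + intros b Hb t. simpl. rewrite HN by (right; auto).
      rewrite suffix_loop with (mk := GStar); auto. simpl. tauto.
    + intros u Hu. eapply mono; eauto.
  -
    destruct (projD g _ n) as [p1 n1] eqn:E1. inversion Heq; subst.
    pose proof Hnd as Hnd'. simpl in Hnd'. inversion Hnd'; subst.
    set (G := game_sem (GCross l g) X).
    set (GZ := game_sem (GCross l g) Z).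
    assert (HS1 : forall u, fmla_sem (S (Node (lab g))) u <-> ~ game_sem g G u).
    { intro u. rewrite HN by (right; apply lab_in).
      rewrite suffix_loop with (mk := GCross); auto; [|apply lab_in].
      rewrite suffix_self. simpl. tauto. }
    assert (HGZ : forall u, G u -> GZ u) by (intros u Hu; eapply mono; eauto).
    simpl in H. destruct H as [W [HW Hw]].
    exists (fun v => W v \/ GZ v). split; [|left; auto].
    intros v [Hv|Hv].
    + destruct (HW v Hv) as [HW1 HW2]. split.
      * destruct (classic (X v)) as [Hx|Hx]; auto. apply HW1, HE; auto.
      * destruct (classic (fmla_sem (S (Node (lab g))) v)) as [Hs|Hs].
        -- eapply IHg with (X := G) (Z := fun v => W v \/ GZ v); eauto.
           ++ intro t. cbn [upd_end fmla_sem]. rewrite HS1, HE. split.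
              ** intros [h|h] HG; apply cross_unfold in HG as [h1 h2]; tauto.
              ** intro nG. destruct (classic (X t)) as [Hx|Hx]; [left|right; auto].
                 intro hg; apply nG; apply cross_fold; auto.
           ++ intros b Hb t. simpl. rewrite HN by (right; auto).
              rewrite suffix_loop with (mk := GCross); auto. simpl. tauto.
           ++ eapply mono; [|apply HW2; exact Hs]. intros u Hu; left; auto.
        -- rewrite HS1 in Hs. apply NNPP in Hs.
           eapply mono; [|exact Hs]. intros u Hu; right; auto.
    + apply cross_unfold in Hv as [h1 h2]. split; auto.
      eapply mono; [|exact h2]. intros u Hu; right; auto.
Qed.

Theorem mainTheorem6 (alpha : game) (phi : fmla)
  (Huniq : NoDup (nodes alpha)) :
  valid (FEquiv (Dia (projAngel alpha (mpAngel alpha phi)) phi)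
                (Dia alpha phi)) /\
  valid (FEquiv (Box (projDemon alpha (mpDemon alpha phi)) phi)
                (Box alpha phi)).
Proof.
  split; intro w.
  - unfold projAngel.
    destruct (projA alpha (mpAngel alpha phi) (fresh alpha)) as [p n'] eqn:E.
    simpl. split.
    + intro H. eapply projA_sound; eauto.
    + intro H. eapply projA_complete with (X := fmla_sem phi); eauto.
      * intro u; simpl; tauto.
      * intros b Hb u; simpl; tauto.
  - unfold projDemon.
    destruct (projD alpha (mpDemon alpha phi) (fresh alpha)) as [p n'] eqn:E.
    simpl. split.
    + intros H1 H2. apply H1. eapply projD_sound; eauto.
    + intros H1 H2. apply H1.
      eapply projD_complete with (X := fun u => ~ fmla_sem phi u); eauto.
      * intro u; simpl. split; [tauto|]. apply NNPP.
      * intros b Hb u; simpl; tauto.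
Qed.
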